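(* Let $G=(V,E)$ be a finite connected simple graph with vertex-weight $m_0\colon V\to\mathbb{R}_{>0}$ and distance parameter $d\colon E\to\mathbb{R}_{>0}$. Then $$\delta(G,m_0,d)=\max\{1-\nu(G,m_0,d),\,0\}.$$
   Context: Let $M=\sum_{u\in V}m_0(u)$ and $\|\cdot\|$ the Euclidean norm on $\mathbb{R}^{|V|}$. For $\varphi\colon V\to\mathbb{R}^{|V|}$, $\mathrm{bar}(\varphi)=\frac1M\sum_u m_0(u)\varphi(u)$. Define $\delta(G,m_0,d)=\inf\|\mathrm{bar}(\varphi)\|^2$ over all $\varphi\colon V\to\mathbb{R}^{|V|}$ with $\sum_u m_0(u)\|\varphi(u)\|^2=M$ and $\|\varphi(u)-\varphi(v)\|\le d(uv)$ for all $uv\in E$. Define $\nu(G,m_0,d)=\sup\frac1M\sum_{u}m_0(u)\|\varphi(u)\|^2$ over all $\varphi\colon V\to\mathbb{R}^{|V|}$ with $\sum_u m_0(u)\varphi(u)=0$ and $\|\varphi(u)-\varphi(v)\|\le d(uv)$ for all $uv\in E$. *)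

(* Defs.v *)
From HB Require Import structures.
From mathcomp Require Import all_boot all_order all_algebra.
From mathcomp Require Import boolp classical_sets reals.
Set Implicit Arguments. Unset Strict Implicit. Unset Printing Implicit Defensive.
Import Order.TTheory GRing.Theory Num.Theory.
Local Open Scope ring_scope.
Local Open Scope classical_set_scope.

Section Defs.
Variables (R : realType) (V : finType).

Definition sqnorm (x : 'rV[R]_#|V|) : R := \sum_(i < #|V|) (x 0 i) ^+ 2.
Definition enorm (x : 'rV[R]_#|V|) : R := Num.sqrt (sqnorm x).

(* simple graph: adj symmetric irreflexive relation on V; edges are the
   unordered pairs [set u; v] with adj u v *)
Definition simple_graph (adj : rel V) : Prop :=
  symmetric adj /\ irreflexive adj.
Definition connected_graph (adj : rel V) : Prop :=
  forall u v : V, connect adj u v.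

Variables (adj : rel V) (m0 : V -> R) (d : {set V} -> R).

Definition total_mass : R := \sum_(u : V) m0 u.

Definition bar (phi : V -> 'rV[R]_#|V|) : 'rV[R]_#|V| :=
  total_mass^-1 *: \sum_(u : V) m0 u *: phi u.

Definition edge_lipschitz (phi : V -> 'rV[R]_#|V|) : Prop :=
  forall u v : V, adj u v -> enorm (phi u - phi v) <= d [set u; v].

Definition delta : R :=
  inf [set x : R | exists phi : V -> 'rV[R]_#|V|,
        [/\ \sum_(u : V) m0 u * sqnorm (phi u) = total_mass,
            edge_lipschitz phi &
            x = sqnorm (bar phi)]].

Definition nu : R :=
  sup [set x : R | exists phi : V -> 'rV[R]_#|V|,
        [/\ \sum_(u : V) m0 u *: phi u = 0,
            edge_lipschitz phi &
            x = total_mass^-1 * \sum_(u : V) m0 u * sqnorm (phi u)]].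

End Defs.

(* Main.v *)
Require Import Defs.
From HB Require Import structures.
From mathcomp Require Import all_boot all_order all_algebra.
From mathcomp Require Import boolp classical_sets reals.
From mathcomp Require Import ring lra.
Import Order.TTheory GRing.Theory Num.Theory.
Local Open Scope ring_scope.
Set Implicit Arguments. Unset Strict Implicit. Unset Printing Implicit Defensive.

Section Aux.
Variables (R : realType) (V : finType).
Local Notation vec := 'rV[R]_#|V|.

Lemma sqnorm_ge0 (x : vec) : 0 <= sqnorm x.
Proof. by rewrite /sqnorm; apply: sumr_ge0 => i _; rewrite sqr_ge0. Qed.

Lemma coord_le (x : vec) i : (x 0 i) ^+ 2 <= sqnorm x.
Proof.
rewrite /sqnorm (bigD1 i) //= lerDl; apply: sumr_ge0 => j _; exact: sqr_ge0.
Qed.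

Lemma coord_le_enorm (x : vec) i : `|x 0 i| <= enorm x.
Proof.
rewrite /enorm -(sqrtr_sqr (x 0 i)); rewrite ler_sqrt ?coord_le ?sqnorm_ge0 ?sqr_ge0 //.
Qed.

Lemma sqnormZ c (x : vec) : sqnorm (c *: x) = c ^+ 2 * sqnorm x.
Proof.
rewrite /sqnorm mulr_sumr; apply: eq_bigr => i _; rewrite mxE; ring.
Qed.

Lemma sqnormN (x : vec) : sqnorm (- x) = sqnorm x.
Proof. by rewrite -scaleN1r sqnormZ; rewrite expr2 mulN1r opprK mul1r. Qed.

Lemma key (I : finType) (m : I -> R) (psi : I -> vec) (b : vec) :
  \sum_u m u *: psi u = 0 ->
  \sum_u m u * sqnorm (b + psi u) =
  (\sum_u m u) * sqnorm b + \sum_u m u * sqnorm (psi u).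
Proof.
move=> H0.
have Hc : forall i, \sum_u m u * psi u 0 i = 0.
  move=> i; have := congr1 (fun M : vec => M 0 i) H0; rewrite /= summxE (_ : (0 : vec) 0 i = 0); last by rewrite mxE.
  by move=> H; apply: etrans H; apply: eq_bigr => u _; rewrite mxE.
rewrite /sqnorm.
transitivity (\sum_i \sum_u m u * ((b + psi u) 0 i)^+2).
  by rewrite exchange_big; apply: eq_bigr => u _; rewrite mulr_sumr.
transitivity (\sum_i ((\sum_u m u) * b 0 i ^+2 + \sum_u m u * psi u 0 i ^+ 2)).
  apply: eq_bigr => i _.
  under eq_bigr do rewrite mxE.
  have -> : \sum_u m u * (b 0 i + psi u 0 i) ^+ 2 =
     \sum_u (m u * (b 0 i)^+2 + (2 * b 0 i) * (m u * psi u 0 i) + m u * psi u 0 i ^+ 2).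
    by apply: eq_bigr => u _; ring.
  by rewrite !big_split /= -mulr_sumr Hc mulr0 addr0 -mulr_suml.
rewrite big_split /= mulr_sumr; congr (_ + _).
by rewrite exchange_big; apply: eq_bigr => u _; rewrite mulr_sumr.
Qed.
End Aux.

Section Main.
Variables (R : realType) (V : finType) (adj : rel V) (m0 : V -> R) (d : {set V} -> R).
Hypotheses (Vn : (0 < #|V|)%N) (Hconn : connected_graph adj)
  (Hm : forall u, 0 < m0 u) (Hd : forall u v, adj u v -> 0 < d [set u; v]).
Local Notation vec := 'rV[R]_#|V|.
Local Notation M := (total_mass m0).

Lemma M_gt0 : 0 < M.
Proof.
have [u0 _] : exists u0 : V, true.
  case: (pickP (@predT V)) => [u0 _|H]; first by exists u0.
  by move: Vn; rewrite (eq_card0 H).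
rewrite /total_mass (bigD1 u0) //=; apply: lt_le_trans (Hm u0) _.
by rewrite lerDl sumr_ge0 // => u _; apply: ltW.
Qed.

Definition Dsum : R := \sum_x \sum_y (if adj x y then d [set x; y] else 0).

Lemma Dterm_ge0 x y : 0 <= (if adj x y then d [set x; y] else 0).
Proof. by case: ifP => // /Hd /ltW. Qed.

Lemma Dsum_ge0 : 0 <= Dsum.
Proof. by apply: sumr_ge0 => x _; apply: sumr_ge0 => y _; apply: Dterm_ge0. Qed.

Lemma Dsum_ge x y : adj x y -> d [set x; y] <= Dsum.
Proof.
move=> H; rewrite /Dsum (bigD1 x) //= (bigD1 y) //= H -addrA lerDl.
apply: addr_ge0; first by apply: sumr_ge0 => z _; apply: Dterm_ge0.
by apply: sumr_ge0 => z _; apply: sumr_ge0 => w _; apply: Dterm_ge0.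
Qed.

Section Bound.
Variable psi : V -> vec.
Hypothesis Hl : edge_lipschitz adj d psi.
Hypothesis H0 : \sum_u m0 u *: psi u = 0.

Lemma step x y i : adj x y -> `|psi x 0 i - psi y 0 i| <= Dsum.
Proof.
move=> H; apply: le_trans (Dsum_ge H).
apply: le_trans (Hl H).
by have := coord_le_enorm (psi x - psi y) i; rewrite !mxE.
Qed.

Lemma path_bound i p x : path adj x p ->
  `|psi x 0 i - psi (last x p) 0 i| <= Dsum *+ size p.
Proof.
elim: p x => [|y p IH] x /=; first by rewrite subrr normr0.
move=> /andP [Hxy Hp].
apply: le_trans (ler_distD (psi y 0 i) _ _) _.
by rewrite mulrS lerD // ?step // IH.
Qed.

Lemma diff_bound i u v : `|psi u 0 i - psi v 0 i| <= Dsum *+ #|V|.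
Proof.
have /connectP [p Hp ->] := Hconn u v.
case: (shortenP Hp) => p' Hp' Hu _.
apply: le_trans (path_bound i Hp') _.
apply: ler_wpMn2l; first exact: Dsum_ge0.
have := max_card (mem (u :: p')); rewrite (card_uniqP Hu) /=.
by move=> /ltnW.
Qed.

Lemma coord_bound i u : `|psi u 0 i| <= Dsum *+ #|V|.
Proof.
have Hc : \sum_v m0 v * psi v 0 i = 0.
  have := congr1 (fun A : vec => A 0 i) H0.
  rewrite /= summxE (_ : (0 : vec) 0 i = 0); last by rewrite mxE.
  by move=> H; apply: etrans H; apply: eq_bigr => v _; rewrite mxE.
have -> : psi u 0 i = M^-1 * \sum_v m0 v * (psi u 0 i - psi v 0 i).
  under eq_bigr do rewrite mulrBr.
  rewrite sumrB Hc subr0 -mulr_suml mulrA mulVf ?mul1r //.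
  by apply: lt0r_neq0; exact: M_gt0.
have HM := M_gt0.
have HMi : 0 <= M^-1 by rewrite invr_ge0 ltW.
rewrite normrM (ger0_norm HMi).
rewrite ler_pdivrMl //.
apply: le_trans (ler_norm_sum _ _ _) _.
rewrite /total_mass mulr_suml; apply: ler_sum => v _.
rewrite normrM (ger0_norm (ltW (Hm v))) ler_pM2l ?Hm //.
exact: diff_bound.
Qed.

Lemma Q_bound : M^-1 * \sum_u m0 u * sqnorm (psi u) <= ((Dsum *+ #|V|)^+2) *+ #|V|.
Proof.
set C := (Dsum *+ #|V|)^+2 *+ #|V|.
have Hs : forall u, sqnorm (psi u) <= C.
  move=> u; rewrite /sqnorm /C.
  have -> : (Dsum *+ #|V|)^+2 *+ #|V| = \sum_(i < #|V|) (Dsum *+ #|V|)^+2.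
    by rewrite sumr_const card_ord.
  apply: ler_sum => i _.
  have := coord_bound i u; have := normr_ge0 (psi u 0 i).
  rewrite -(real_normK (num_real (psi u 0 i))).
  set a := `|_|; set b := Dsum *+ _; move=> ha hb; nra.
rewrite ler_pdivrMl ?M_gt0 // /total_mass mulr_suml; apply: ler_sum => u _.
by rewrite ler_pM2l ?Hs.
Qed.
End Bound.


Definition Nset : set R := [set x : R | exists phi : V -> vec,
        [/\ \sum_(u : V) m0 u *: phi u = 0,
            edge_lipschitz adj d phi &
            x = (total_mass m0)^-1 * \sum_(u : V) m0 u * sqnorm (phi u)]].
Definition Dset : set R := [set x : R | exists phi : V -> vec,
        [/\ \sum_(u : V) m0 u * sqnorm (phi u) = total_mass m0,
            edge_lipschitz adj d phi &
            x = sqnorm (bar m0 phi)]].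

Lemma nuE : nu adj m0 d = sup Nset. Proof. by []. Qed.
Lemma deltaE : delta adj m0 d = inf Dset. Proof. by []. Qed.

Lemma Nset0 : Nset 0.
Proof.
exists (fun _ => 0); split.
- by apply: big1 => u _; rewrite scaler0.
- move=> u v Huv; rewrite subrr /enorm /sqnorm big1 ?sqrtr0 ?(ltW (Hd Huv)) //.
  by move=> i _; rewrite mxE expr0n.
- by rewrite big1 ?mulr0 // => u _; rewrite /sqnorm big1 ?mulr0 // => i _; rewrite mxE expr0n.
Qed.

Lemma Nsup : has_sup Nset.
Proof.
split; first by exists 0; exact: Nset0.
exists ((Dsum *+ #|V|)^+2 *+ #|V|) => x [phi [H0 Hl ->]].
exact: Q_bound.
Qed.

Lemma Dlb : has_lbound Dset.
Proof. by exists 0 => x [phi [_ _ ->]]; apply: sqnorm_ge0. Qed.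

Definition i0 : 'I_#|V| := Ordinal Vn.
Definition e0 : vec := delta_mx 0 i0.

Lemma sqnorm_e0 : sqnorm e0 = 1.
Proof.
rewrite /sqnorm (bigD1 i0) //= big1 ?addr0 => [|i Hi]; first by rewrite mxE !eqxx expr1n.
by rewrite mxE (negbTE Hi) andbF expr0n.
Qed.

Lemma Dset_of psi : \sum_u m0 u *: psi u = 0 -> edge_lipschitz adj d psi ->
  M^-1 * \sum_u m0 u * sqnorm (psi u) <= 1 ->
  Dset (1 - M^-1 * \sum_u m0 u * sqnorm (psi u)).
Proof.
move=> H0 Hl; set q := _ * _ => Hq.
have HM := M_gt0.
have HMn : M != 0 by apply: lt0r_neq0.
set b := Num.sqrt (1 - q) *: e0.
have Hb : sqnorm b = 1 - q by rewrite sqnormZ sqnorm_e0 mulr1 sqr_sqrtr // subr_ge0.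
exists (fun u => b + psi u); split.
- by rewrite key // Hb /q mulrBr mulr1 mulrA (mulfV HMn) mul1r subrK.
- by move=> u v /Hl; rewrite opprD addrACA subrr add0r.
- rewrite -Hb; congr sqnorm.
  rewrite /bar.
  under eq_bigr do rewrite scalerDr.
  by rewrite big_split /= H0 addr0 -scaler_suml scalerA mulVf // scale1r.
Qed.

Lemma Dset_ge x : Dset x -> 1 - nu adj m0 d <= x.
Proof.
move=> [phi [Hs Hl ->]].
have HM := M_gt0.
have HMn : M != 0 by apply: lt0r_neq0.
set b := bar m0 phi.
pose psi u := phi u - b.
have H0 : \sum_u m0 u *: psi u = 0.
  rewrite /psi; under eq_bigr do rewrite scalerBr.
  rewrite sumrB -scaler_suml /b /bar scalerA mulfV // scale1r subrr //.
have Hl' : edge_lipschitz adj d psi.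
  by move=> u v /Hl; rewrite /psi opprB addrA subrK.
have Hk := key b H0.
have Hphi : forall u, phi u = b + psi u by move=> u; rewrite /psi addrC subrK.
have HN : Nset (M^-1 * \sum_u m0 u * sqnorm (psi u)) by exists psi.
have Hle := sup_upper_bound Nsup HN.
rewrite nuE.
have E : \sum_u m0 u * sqnorm (psi u) = M - M * sqnorm b.
  rewrite -{1}Hs; under [X in _ = X - _]eq_bigr do rewrite Hphi.
  rewrite Hk /total_mass; ring.
move: Hle; rewrite /= E mulrBr mulrA mulVf // !mul1r.
move=> H; lra.
Qed.

Lemma lip0 : edge_lipschitz adj d (fun _ => (0 : vec)).
Proof.
move=> u v Huv; rewrite subrr /enorm /sqnorm big1 ?sqrtr0 ?(ltW (Hd Huv)) //.
by move=> i _; rewrite mxE expr0n.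
Qed.

Lemma main_eq : delta adj m0 d = Num.max (1 - nu adj m0 d) 0.
Proof.
have HM := M_gt0.
have HMn : M != 0 by apply: lt0r_neq0.
have Dne : exists x, Dset x.
  have Z : \sum_u m0 u *: (fun _ : V => (0 : vec)) u = 0 by apply: big1 => u _; rewrite scaler0.
  have Hsum : \sum_u m0 u * sqnorm ((fun _ : V => (0 : vec)) u) = 0.
    by rewrite big1 // => u _; rewrite /sqnorm big1 ?mulr0 // => i _; rewrite mxE expr0n.
  eexists; apply: (Dset_of Z lip0); rewrite Hsum mulr0; exact: ler01.
rewrite deltaE; apply/le_anti/andP; split; last first.
  apply: lb_le_inf => // x Dx; rewrite ge_max Dset_ge //=.
  by case: Dx => phi [_ _ ->]; apply: sqnorm_ge0.
have [Hnu|Hnu] := lerP (nu adj m0 d) 1.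
  have -> : Num.max (1 - nu adj m0 d) 0 = 1 - nu adj m0 d.
    by apply/max_idPl; rewrite subr_ge0.
  suff : nu adj m0 d <= 1 - inf Dset by move=> H; lra.
  rewrite nuE; apply: ge_sup; first by exists 0; exact: Nset0.
  move=> y [psi [H0 Hl ->]].
  have Hq : M^-1 * \sum_u m0 u * sqnorm (psi u) <= 1.
    apply: le_trans Hnu; rewrite nuE; apply: (sup_upper_bound Nsup); by exists psi.
  have := ge_inf Dlb (Dset_of H0 Hl Hq) => /= H; lra.
have Heps : 0 < nu adj m0 d - 1 by rewrite subr_gt0.
have [y [psi [H0 Hl Ey]] Hy] := sup_adherent Heps Nsup.
rewrite -nuE opprB addrCA subrr addr0 in Hy.
have Hy0 : 0 < y by apply: lt_trans Hy.
set t := Num.sqrt (y^-1).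
have Ht2 : t ^+ 2 = y^-1 by rewrite sqr_sqrtr // invr_ge0 ltW.
have Ht1 : t <= 1.
  rewrite /t -sqrtr1 ler_sqrt // invf_le1 // ltW //.
have Ht0 : 0 <= t by apply: sqrtr_ge0.
have H0' : \sum_u m0 u *: (t *: psi u) = 0.
  under eq_bigr do rewrite scalerA mulrC -scalerA.
  by rewrite -scaler_sumr H0 scaler0.
have Hl' : edge_lipschitz adj d (fun u => t *: psi u).
  move=> u v /Hl; apply: le_trans; rewrite -scalerBr /enorm ler_sqrt ?sqnorm_ge0 //.
  rewrite sqnormZ ler_piMl ?sqnorm_ge0 //.
  by rewrite expr_le1.
have EQ : M^-1 * \sum_u m0 u * sqnorm (t *: psi u) = 1.
  under eq_bigr do rewrite sqnormZ mulrCA.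
  by rewrite -mulr_sumr Ht2 mulrCA -Ey mulVf // gt_eqF.
have := Dset_of H0' Hl'; rewrite EQ subrr => /(_ (lexx 1)) D0.
apply: le_trans (ge_inf Dlb D0) _.
by rewrite le_max lexx orbT.
Qed.
End Main.

Unset Implicit Arguments.
Set Strict Implicit.
Theorem proposition2p4 (R : realType) (V : finType) (adj : rel V)
    (m0 : V -> R) (d : {set V} -> R) :
  (0 < #|V|)%N ->
  simple_graph adj ->
  connected_graph adj ->
  (forall u : V, 0 < m0 u) ->
  (forall u v : V, adj u v -> 0 < d [set u; v]) ->
  delta adj m0 d = Num.max (1 - nu adj m0 d) 0.
Proof. by move=> Vn _ Hc Hm Hd; apply: main_eq. Qed.
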